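(* For every integer $n\ge 3$: $\chi_{ei}(C_n)=1$ if $n=3$; $\chi_{ei}(C_n)=2$ if $n\ge 4$ and $n$ is even; $\chi_{ei}(C_n)=3$ if $n\ge 4$ and $n$ is odd.
   Context: All graphs are finite and simple. $C_n$ is the cycle on $n$ vertices. A path $P_4$ in $G$ is a sequence $uxyv$ of four distinct vertices with $ux,xy,yv\in E(G)$; $u,v$ are its end vertices. An $e$-injective $k$-coloring of $G$ is a function $f:V(G)\to\{1,\dots,k\}$ with $f(u)\ne f(v)$ whenever $u,v$ are the end vertices of some path $P_4$ in $G$; $\chi_{ei}(G)$ is the least such $k$. *)

(* Defs.v *)
From mathcomp Require Import all_boot.
Set Implicit Arguments. Unset Strict Implicit. Unset Printing Implicit Defensive.

(* A finite simple graph is a symmetric irreflexive relation e on a finType T. *)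

Definition cycle_graph (n : nat) : rel 'I_n :=
  fun i j => (nat_of_ord j == i.+1 %% n) || (nat_of_ord i == j.+1 %% n).

Arguments cycle_graph n : clear implicits.

Definition P4_ends (T : finType) (e : rel T) (u v : T) : Prop :=
  exists x y : T, [&& uniq [:: u; x; y; v], e u x, e x y & e y v].

(* An e-injective k-coloring: colours are the k elements of 'I_k
   (standing for {1,...,k}); end vertices of any P4 get distinct colours. *)
Definition ei_coloring (T : finType) (e : rel T) (k : nat) (f : T -> 'I_k) : Prop :=
  forall u v : T, P4_ends e u v -> f u != f v.

Definition ei_colorable (T : finType) (e : rel T) (k : nat) : Prop :=
  exists f : T -> 'I_k, ei_coloring e f.

Definition is_chi_ei (T : finType) (e : rel T) (k : nat) : Prop :=
  ei_colorable e k /\ forall k', ei_colorable e k' -> k <= k'.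

(* Main.v *)
Require Import Defs.
From mathcomp Require Import all_boot.
From mathcomp Require Import zify.
Set Implicit Arguments.

Lemma succ_mod n (a : 'I_n) : a.+1 %% n = if a.+1 == n then 0 else a.+1.
Proof. case: eqP => h; first by rewrite h modnn. rewrite modn_small //. have := ltn_ord a. lia. Qed.

Lemma edge_val n (u x : 'I_n) : cycle_graph n u x =
  ((x:nat) == (if u.+1 == n then 0 else u.+1)) || ((u:nat) == (if x.+1 == n then 0 else x.+1)).
Proof. by rewrite /cycle_graph !succ_mod. Qed.

Lemma P4_char n (hn : 4 <= n) (u v : 'I_n) : P4_ends (cycle_graph n) u v ->
  [|| u+3 == v :> nat, u+3 == v+n, v+3 == u | v+3 == u+n].
Proof.
case=> x [y /and4P [Hu Hux Hxy Hyv]].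
rewrite /= !inE in Hu.
have E : forall a b : 'I_n, (a == b) = (nat_of_ord a == nat_of_ord b) by [].
rewrite !E in Hu.
rewrite !edge_val in Hux Hxy Hyv.
have := ltn_ord u; have := ltn_ord v; have := ltn_ord x; have := ltn_ord y.
move: Hu Hux Hxy Hyv.
case: (u.+1 == n) / eqP; case: (x.+1 == n) / eqP;case: (y.+1 == n) / eqP;case: (v.+1 == n) / eqP; lia.
Qed.

Lemma mod_small2 a n : a < n + n -> a %% n = if a < n then a else a - n.
Proof.
move=> ha; case: ifP => h; first by rewrite modn_small. move/negbT: h => h.
have -> : a = (a - n) + n by lia.
rewrite modnDr modn_small; lia.
Qed.

Lemma P4_of n (hn : 4 <= n) (u v : 'I_n) : (v:nat) = (u+3) %% n -> P4_ends (cycle_graph n) u v.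
Proof.
move=> hv.
have n0 : 0 < n by lia.
exists (Ordinal (ltn_pmod (u+1) n0)), (Ordinal (ltn_pmod (u+2) n0)).
have E : forall a b : 'I_n, (a == b) = (nat_of_ord a == nat_of_ord b) by [].
rewrite /= !inE !E !edge_val /= hv.
have hu := ltn_ord u.
rewrite !mod_small2; try lia.
 repeat match goal with |- context[if ?b then _ else _] => let h := fresh in case: b / idP => h end; lia.
Qed.

Lemma E_ord n (a b : 'I_n) : (a == b) = (nat_of_ord a == nat_of_ord b).
Proof. by []. Qed.

Lemma col_pos n k : 0 < n -> ei_colorable (cycle_graph n) k -> 0 < k.
Proof. move=> n0 [f _]; case: (f (Ordinal n0)) => m; lia. Qed.

Definition b2o (b : bool) : 'I_2 := @Ordinal 2 b (leq_b1 b).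

Lemma oddE u : u = (u./2) * 2 + odd u.
Proof. by rewrite muln2 addnC odd_double_half. Qed.

Lemma part_even n (hn : 4 <= n) (he : ~~ odd n) : is_chi_ei (cycle_graph n) 2.
Proof.
split.
  exists (fun i : 'I_n => b2o (odd i)) => u v /(P4_char hn) H.
  rewrite E_ord /=.
  have := oddE u; have := oddE v; have := oddE n; rewrite (negbTE he).
  move: H; case: (odd u); case: (odd v) => /=; lia.
move=> k [f Hf].
have h3 : 3 < n by lia.
have h0 : 0 < n by lia.
have := Hf (Ordinal h0) (Ordinal h3) (@P4_of n hn (Ordinal h0) (Ordinal h3) _).
rewrite modn_small //= => /(_ erefl).
rewrite E_ord.
have := ltn_ord (f (Ordinal h0)); have := ltn_ord (f (Ordinal h3)); lia.
Qed.

Definition c5 (n i : nat) : nat :=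
  if n == 5 then (if i < 2 then 0 else if i == 2 then 2 else 1)
  else if i < 3 then 2 else odd i.

Lemma c5_lt n i : c5 n i < 3.
Proof. rewrite /c5; case: ifP => _; repeat case: ifP => _ //; by case: odd. Qed.

Lemma part_odd n (hn : 4 <= n) (ho : odd n) : is_chi_ei (cycle_graph n) 3.
Proof.
have n0 : 0 < n by lia.
split.
  exists (fun i : 'I_n => Ordinal (c5_lt n i)) => u v /(P4_char hn) H.
  rewrite E_ord /= /c5.
  have := ltn_ord u; have := ltn_ord v.
  have := oddE u; have := oddE v; have := oddE n; rewrite ho.
  move: H; case: (odd u); case: (odd v) => /=;
  repeat match goal with |- context[if ?b then _ else _] => let h := fresh in case: b / idP => h end; lia.
move=> k [f Hf].
case: (ltnP 2 k) => // hk.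
pose g (i : 'I_n) := (nat_of_ord (f i) == 0).
have step : forall i : 'I_n, g (Ordinal (ltn_pmod (i + 3) n0)) = ~~ g i.
  move=> i.
  have := Hf i (Ordinal (ltn_pmod (i + 3) n0)) (@P4_of n hn i (Ordinal (ltn_pmod (i + 3) n0)) erefl).
  rewrite /g E_ord.
  have := ltn_ord (f i); have := ltn_ord (f (Ordinal (ltn_pmod (i + 3) n0))).
  case: eqP; case: eqP; lia.
pose h k := g (Ordinal (ltn_pmod (3 * k) n0)).
have hS : forall k, h k.+1 = ~~ h k.
  move=> m; rewrite /h -step; congr g; apply: val_inj => /=.
  by rewrite modnDml mulnS addnC.
have hk' : forall m, h m = h 0 (+) odd m.
  elim=> [|m IH]; first by rewrite addbF.
  by rewrite hS IH /= addbN.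
have := hk' n; rewrite ho.
have -> : h n = h 0 by rewrite /h; congr g; apply: val_inj => /=; rewrite muln0 mod0n modnMl.
by case: (h 0).
Qed.

Lemma part_three : is_chi_ei (cycle_graph 3) 1.
Proof.
split.
  exists (fun _ => ord0) => u v [x [y /and4P [Hu _ _ _]]].
  exfalso; move: Hu; rewrite /= !inE !E_ord.
  have := ltn_ord u; have := ltn_ord v; have := ltn_ord x; have := ltn_ord y; lia.
move=> k; exact: col_pos.
Qed.

Theorem proposition3p2 (n : nat) (hn : 3 <= n) :
  (n = 3 -> is_chi_ei (cycle_graph n) 1) /\
  (4 <= n -> ~~ odd n -> is_chi_ei (cycle_graph n) 2) /\
  (4 <= n -> odd n -> is_chi_ei (cycle_graph n) 3).
Proof.
split; first by move=> ->; exact: part_three.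
split; [exact: part_even | exact: part_odd].
Qed.
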